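(* Let $N_0,N_B,N_f\ge1$ be integers with $N_B$ dividing $N_0$, and set $n=N_0/N_B$. Let $\Sigma_{\tilde x}\in\mathbb{R}^{N_B\times N_B}$ be positive definite, let $\Sigma_x=\mathrm{blockdiag}(\Sigma_{\tilde x},\dots,\Sigma_{\tilde x})\in\mathbb{R}^{N_0\times N_0}$ ($n$ identical blocks), let $\sigma^2>0$ and $F>0$. Let $X\sim\mathcal{N}(0;\Sigma_x)$, and for $W\in\mathbb{R}^{N_f\times N_B}$ and $b\in\mathbb{R}^{nN_f}$ let $Z\in\mathbb{R}^{nN_f}$ satisfy $Z\mid X,W,b\sim\mathcal{N}(X\circledast W+b;\,\sigma^2 I_{nN_f})$. Define $\mathrm{MMI}(X;Z)\triangleq\sup\{I_{W,b}(X;Z): W\in\mathbb{R}^{N_f\times N_B},\ b\in\mathbb{R}^{nN_f},\ \mathrm{Tr}(W^TW)\le F\}$. Then $$\mathrm{MMI}(X;Z)=\frac{N_0}{N_B}\,M_{LFC}(F;\Sigma_{\tilde x},N_B,N_f).$$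
   Context: $\mathcal{N}(\mu;A)$ denotes the Gaussian distribution with mean $\mu$ and covariance $A$. For $j=1,\dots,n$, $\tilde X_j\in\mathbb{R}^{N_B}$ is the slice of $X$ on indices $(j-1)N_B+1,\dots,jN_B$, and $X\circledast W\triangleq\begin{bmatrix}(W\tilde X_1)^T & (W\tilde X_2)^T&\cdots&(W\tilde X_n)^T\end{bmatrix}^T\in\mathbb{R}^{nN_f}$ (a non-overlapping-stride convolution with $N_f$ filters). $I_{W,b}(X;Z)$ is the mutual information between $X$ and $Z$ under the joint law determined by $W,b$. For a positive definite $\Sigma\in\mathbb{R}^{p\times p}$ and integers $p,q\ge1$, $M_{LFC}(F;\Sigma,p,q)$ denotes the maximum mutual information of the single-layer linear fully connected Gaussian model: $M_{LFC}(F;\Sigma,p,q)=\sup\{I(X';Z'): W'\in\mathbb{R}^{q\times p},\ b'\in\mathbb{R}^q,\ \mathrm{Tr}(W'^TW')\le F\}$ where $X'\sim\mathcal{N}(0;\Sigma)$ and $Z'\mid X'\sim\mathcal{N}(W'X'+b';\sigma^2 I_q)$ (its value is given explicitly by the water-filling formulas: with $\lambda_1\ge\dots\ge\lambda_p$ the eigenvalues of $\Sigma$, $\tilde N=\min(p,q)$, $\rho_k=\sigma^2(k/\lambda_k-\sum_{i\le k}1/\lambda_i)$, and $m$ the largest $k\le\tilde N$ with $\rho_k\le F$, it equals $\frac m2\log\frac{F+\sigma^2\sum_{i\le m}1/\lambda_i}{\sigma^2 m}+\frac12\sum_{i\le m}\log\lambda_i$). *)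

(* Defs.v *)
From HB Require Import structures.
From mathcomp Require Import all_boot all_order all_algebra.
From mathcomp Require Import all_classical all_reals all_analysis.
Set Implicit Arguments. Unset Strict Implicit. Unset Printing Implicit Defensive.
Import Order.TTheory GRing.Theory Num.Theory.
Local Open Scope ring_scope.
Local Open Scope classical_set_scope.

Section Defs.
Variable R : realType.

(* entry (i,j) of a matrix addressed by natural numbers (0 outside range) *)
Definition mxat (p q : nat) (A : 'M[R]_(p, q)) (i j : nat) : R :=
  if (insub i : option 'I_p) is Some a then
    if (insub j : option 'I_q) is Some b then A a b else 0
  else 0.

Definition posdef (p : nat) (S : 'M[R]_p) : Prop :=
  S^T = S /\ forall x : 'cV[R]_p, x != 0 -> 0 < (x^T *m S *m x) 0 0.

(* Sigma_x = blockdiag(St, ..., St) in R^{N0 x N0}, blocks of size NB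
   (0-based index i lies in block i %/ NB at position i %% NB) *)
Definition blkdiag_rep (N0 NB : nat) (St : 'M[R]_NB) : 'M[R]_N0 :=
  \matrix_(i < N0, j < N0)
    (if (i %/ NB == j %/ NB)%N then mxat St (i %% NB)%N (j %% NB)%N else 0).

(* Matrix of the linear map X |-> conv(X, W) (non-overlapping stride convolution):
   output block k (indices k*Nf .. k*Nf+Nf-1) is W * (input block k). *)
Definition convmx (N0 NB Nf : nat) (W : 'M[R]_(Nf, NB))
  : 'M[R]_((N0 %/ NB * Nf)%N, N0) :=
  \matrix_(i < (N0 %/ NB * Nf)%N, j < N0)
    (if (i %/ Nf == j %/ NB)%N then mxat W (i %% Nf)%N (j %% NB)%N else 0).

(* differential entropy (nats) of N(mu; K) in R^q *)
Definition gauss_entropy (q : nat) (K : 'M[R]_q) : R :=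
  (q%:R * ln (2 * pi * expR 1) + ln (\det K)) / 2.

(* Mutual information I(X;Z) for X ~ N(0;S) in R^p and
   Z | X ~ N(A X + b; s2 I_q): I = h(Z) - h(Z|X), where
   Z ~ N(b; A S A^T + s2 I) and h(Z|X) = h(N(0; s2 I)). *)
Definition lingauss_MI (p q : nat) (S : 'M[R]_p) (A : 'M[R]_(q, p))
  (b : 'cV[R]_q) (s2 : R) : R :=
  gauss_entropy (A *m S *m A^T + s2%:M) - gauss_entropy (s2%:M : 'M[R]_q).

Definition M_LFC (s2 F : R) (p q : nat) (S : 'M[R]_p) : \bar R :=
  ereal_sup [set v : \bar R | exists (W' : 'M[R]_(q, p)) (b' : 'cV[R]_q),
     \tr (W'^T *m W') <= F /\ v = (lingauss_MI S W' b' s2)%:E].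

Definition MMI_conv (s2 F : R) (N0 NB Nf : nat) (St : 'M[R]_NB) : \bar R :=
  ereal_sup [set v : \bar R | exists (W : 'M[R]_(Nf, NB))
       (b : 'cV[R]_((N0 %/ NB * Nf)%N)),
     \tr (W^T *m W) <= F /\
     v = (lingauss_MI (blkdiag_rep N0 St) (convmx N0 W) b s2)%:E].

End Defs.

(* Main.v *)
Require Import Defs.
From HB Require Import structures.
From mathcomp Require Import all_boot all_order all_algebra.
From mathcomp Require Import all_classical all_reals all_analysis.
Import Order.TTheory GRing.Theory Num.Theory.
Local Open Scope ring_scope.
Lemma det_psd_pos (R : realType) q (M : 'M[R]_q) (s2 : R) : 0 < s2 ->
  (forall v : 'rV_q, 0 <= (v *m M *m v^T) 0 0) -> 0 < \det (M + s2%:M).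
Proof.
move=> s2p Mpsd.
have nz : forall u : R, 0 <= u -> \det (s2%:M + u *: M) != 0.
  move=> u u0; apply/negP => /det0P [v vn0 vA].
  have hv : 0 < (v *m v^T) 0 0.
    rewrite lt_neqAle eq_sym; apply/andP; split; last first.
      by rewrite mxE sumr_ge0 // => i _; rewrite mxE -expr2 sqr_ge0.
    apply/negP=> /eqP; rewrite mxE => h.
    move/negP: vn0; apply; apply/eqP/matrixP => i j; rewrite (ord1 i) !mxE.
    have hh : (v 0 j) ^+ 2 = 0.
      have := @psumr_eq0P _ _ _ _ _ h j isT.
      by rewrite mxE -expr2; apply => k _; rewrite mxE -expr2 sqr_ge0.
    by move/eqP: hh; rewrite sqrf_eq0 => /eqP.
  have : (v *m (s2%:M + u *: M) *m v^T) 0 0 = 0 by rewrite vA mul0mx mxE.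
  rewrite mulmxDr mulmxDl mul_mx_scalar -scalemxAr -!scalemxAl.
  have hM := Mpsd v.
  rewrite [X in X = 0]mxE. rewrite [X in X + _ = 0]mxE [X in _ + X = 0]mxE => h.
  have : 0 < s2 * (v *m v^T) 0 0 + u * (v *m M *m v^T) 0 0.
    by rewrite ltr_pwDl ?mulr_gt0 ?mulr_ge0.
  by rewrite h ltxx.
pose P : 'M[{poly R}]_q := \matrix_(i, j) (((s2%:M : 'M[R]_q) i j)%:P + M i j *: 'X).
have key : forall u, (\det P).[u] = \det (s2%:M + u *: M).
  move=> u; rewrite -[_.[u]]/(horner_eval u (\det P)) -det_map_mx; congr (\det _).
  by apply/matrixP => i j; rewrite !mxE /= /horner_eval hornerD hornerC hornerZ hornerX mulrC.
rewrite addrC -[M]scale1r -key.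
rewrite ltNge; apply/negP => h1.
have := @poly_ivt R (- \det P) 0 1 ler01.
rewrite !hornerN oppr_le0 oppr_ge0 h1 key scale0r addr0 det_scalar.
case=> [|x /andP[x0 _]]; first by rewrite exprn_ge0 ?ltW.
rewrite /root hornerN oppr_eq0 key; exact/negP/nz.
Qed.
Definition bdiag {R : realType} n {q} (K : 'M[R]_q) : 'M[R]_(n * q) :=
  \matrix_(i, j) (if (i %/ q == j %/ q)%N then mxat K (i %% q)%N (j %% q)%N else 0).

Lemma mxatE (R : realType) p q (A : 'M[R]_(p, q)) (a : 'I_p) (b : 'I_q) :
  mxat A a b = A a b.
Proof. by rewrite /mxat !valK. Qed.

Lemma det_castmx_sq (R : realType) a m (e : a = m) (A : 'M[R]_a) :
  \det (castmx (e, e) A) = \det A.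
Proof. by case: m / e; rewrite castmx_id. Qed.

Lemma det_bdiag (R : realType) n q (K : 'M[R]_q) : (0 < q)%N ->
  \det (bdiag n K) = \det K ^+ n.
Proof.
move=> q0; elim: n => [|n IH]; first by rewrite expr0; exact: det_mx00.
have e : (q + n * q = n.+1 * q)%N by rewrite mulSn.
have -> : bdiag n.+1 K = castmx (e, e) (block_mx K 0 0 (bdiag n K)).
  have hd : forall x, ((q + x) %/ q = (x %/ q).+1)%N.
    by move=> x; rewrite -{1}(mul1n q) divnMDl.
  apply/matrixP => i j; rewrite castmxE !mxE.
  case: (splitP (cast_ord (esym (e,e).1) i)) => a /= ha; rewrite !mxE;
  case: (splitP (cast_ord (esym (e,e).2) j)) => b /= hb; rewrite ?mxE; move: ha hb => /= -> ->.
  - by rewrite !divn_small // !modn_small // eqxx mxatE.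
  - by rewrite hd divn_small.
  - by rewrite hd (divn_small (ltn_ord b)).
  - by rewrite !hd eqSS !modnDl.
by rewrite det_castmx_sq det_ublock IH exprS.
Qed.
Lemma sum_block (R : realType) (F : nat -> R) n p c : (0 < p)%N ->
  \sum_(l < n * p) (if (c == l %/ p)%N then F (l %% p)%N else 0) =
  if (c < n)%N then \sum_(r < p) F r else 0.
Proof.
move=> p0; rewrite -(big_mkord xpredT (fun l => if (c == l %/ p)%N then F (l %% p)%N else 0)) big_nat_mul.
rewrite (eq_big_nat _ _ (F2 := fun a => if c == a then \sum_(r < p) F r else 0)); last first.
  move=> a _; rewrite -{1}(add0n (a * p)%N) big_addn mulSn addnK -(big_mkord xpredT F).
  case: eqP => [->|ne].
    apply: eq_big_nat => r /andP[_ rp].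
    by rewrite addnC divnMDl // divn_small // addn0 eqxx modnMDl modn_small.
  rewrite big1_seq // => r /andP[_]; rewrite mem_index_iota => /andP[_ rp].
  rewrite addnC divnMDl // divn_small // addn0; case: eqP => // /ne //.
case: ltnP => cn.
  rewrite (bigD1_seq c) ?mem_index_iota ?iota_uniq //= eqxx.
  rewrite [X in _ + X]big1_seq ?addr0 //.
  by move=> a /andP[/negPf]; rewrite eq_sym => ->.
rewrite big1_seq // => a /andP[_]; rewrite mem_index_iota => /andP[_ an].
case: eqP => // ca; move: cn; rewrite ca leqNgt an //.
Qed.
Lemma mxat_ord (R : realType) p q (A : 'M[R]_(p, q)) a b (ha : (a < p)%N) (hb : (b < q)%N) :
  mxat A a b = A (Ordinal ha) (Ordinal hb).
Proof. by rewrite -(@mxatE _ _ _ A (Ordinal ha) (Ordinal hb)). Qed.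

Lemma sum_block' (R : realType) (F : nat -> R) m n p c : (0 < p)%N -> m = (n * p)%N ->
  \sum_(l < m) (if (c == l %/ p)%N then F (l %% p)%N else 0) =
  if (c < n)%N then \sum_(r < p) F r else 0.
Proof. by move=> p0 ->; apply: sum_block. Qed.

Lemma conv_quad (R : realType) N0 NB Nf (W : 'M[R]_(Nf,NB)) (St : 'M[R]_NB) s2 :
 (0<NB)%N -> (0<Nf)%N -> (NB %| N0)%N ->
 convmx N0 W *m blkdiag_rep N0 St *m (convmx N0 W)^T + s2%:M =
   bdiag (N0 %/ NB) (W *m St *m W^T + s2%:M).
Proof.
move=> NB0 Nf0 dvd.
have eN0 : N0 = (N0 %/ NB * NB)%N by rewrite divnK.
apply/matrixP => i j; rewrite !mxE.
have bin : forall x : 'I_(N0 %/ NB * Nf), (x %/ Nf < N0 %/ NB)%N.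
  by move=> x; rewrite ltn_divLR.
pose oi := Ordinal (ltn_pmod i Nf0); pose oj := Ordinal (ltn_pmod j Nf0).
have hA : forall k : 'I_N0, (convmx N0 W *m blkdiag_rep N0 St) i k =
    if (i %/ Nf == k %/ NB)%N then mxat (W *m St) (i %% Nf) (k %% NB) else 0.
  move=> k; rewrite mxE.
  rewrite (eq_bigr (fun l : 'I_N0 => if (i %/ Nf == l %/ NB)%N then
     mxat W (i %% Nf) (l %% NB)%N * (if (i %/ Nf == k %/ NB)%N then mxat St (l %% NB)%N (k %% NB) else 0) else 0)); last first.
    move=> l _; rewrite !mxE; case: eqP => [->|]; last by rewrite mul0r.
    by [].
  rewrite (sum_block' _ (fun r => mxat W (i %% Nf) r * (if (i %/ Nf == k %/ NB)%N then mxat St r (k %% NB) else 0)) _ _ _ _ NB0 eN0) bin.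
  case: eqP => _; last by rewrite big1 // => r _; rewrite mulr0.
  rewrite (@mxat_ord _ _ _ (W *m St) _ _ (ltn_pmod i Nf0) (ltn_pmod k NB0)) mxE.
  apply: eq_bigr => r _.
  rewrite (@mxat_ord _ _ _ W _ _ (ltn_pmod i Nf0) (ltn_ord r)) (@mxat_ord _ _ _ St _ _ (ltn_ord r) (ltn_pmod k NB0)).
  by rewrite (_ : Ordinal (ltn_ord r) = r) //; apply: val_inj.
have -> : \sum_(k < N0) (convmx N0 W *m blkdiag_rep N0 St) i k * (convmx N0 W)^T k j =
  \sum_(k < N0) (if (i %/ Nf == k %/ NB)%N then
   mxat (W *m St) (i %% Nf) (k %% NB)%N * (if (j %/ Nf == i %/ Nf)%N then mxat W (j %% Nf) (k %% NB) else 0) else 0).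
  apply: eq_bigr.
  move=> k _; rewrite hA !mxE; case: eqP => [e|]; last by rewrite mul0r.
  by rewrite -e.
rewrite (sum_block' _ (fun r => mxat (W *m St) (i %% Nf) r * (if (j %/ Nf == i %/ Nf)%N then mxat W (j %% Nf) r else 0)) _ _ _ _ NB0 eN0) bin.
rewrite eq_sym; case: eqP => e.
  have eij : (i == j) = (oi == oj).
    by rewrite -val_eqE /= -val_eqE /= {1}(divn_eq i Nf) {1}(divn_eq j Nf) e eqn_add2l.
  rewrite (@mxat_ord _ _ _ _ _ _ (ltn_pmod i Nf0) (ltn_pmod j Nf0)) -/oi -/oj eij.
  rewrite [in RHS]mxE [in RHS]mxE; congr (_ + _); last by rewrite mxE.
  apply: eq_bigr => r _.
  rewrite (@mxat_ord _ _ _ _ _ _ (ltn_pmod i Nf0) (ltn_ord r)) (@mxat_ord _ _ _ _ _ _ (ltn_pmod j Nf0) (ltn_ord r)) mxE.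
  rewrite (_ : Ordinal (ltn_ord r) = r); first by rewrite !mxE.
  exact: ord_inj.
rewrite big1 ?add0r; last by move=> r _; rewrite mulr0.
case: eqP => [eij|]; last by rewrite mulr0n.
by case: e; rewrite eij.
Qed.
From mathcomp Require Import ring.

Lemma quad_psd (R : realType) NB Nf (W : 'M[R]_(Nf, NB)) (St : 'M[R]_NB) :
  posdef St -> forall v : 'rV_Nf, 0 <= (v *m (W *m St *m W^T) *m v^T) 0 0.
Proof.
move=> [_ pd] v.
have -> : v *m (W *m St *m W^T) *m v^T = ((v *m W)^T)^T *m St *m (v *m W)^T.
  by rewrite trmxK trmx_mul !mulmxA.
have [->|nz] := eqVneq (v *m W)^T 0.
  by rewrite mulmx0 mxE.
exact/ltW/pd.
Qed.

Theorem theorem3 (R : realType) (N0 NB Nf : nat) (St : 'M[R]_NB) (s2 F : R) :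
  (0 < N0)%N -> (0 < NB)%N -> (0 < Nf)%N -> (NB %| N0)%N ->
  posdef St -> 0 < s2 -> 0 < F ->
  MMI_conv s2 F N0 Nf St = (((N0 %/ NB)%N%:R)%:E * M_LFC s2 F Nf St)%E.
Proof.
move=> N00 NB0 Nf0 dvd pd s2p Fp.
have hn : (0 < N0 %/ NB)%N by rewrite divn_gt0 // dvdn_leq.
have key : forall (W : 'M[R]_(Nf, NB)) b b',
    lingauss_MI (blkdiag_rep N0 St) (convmx N0 W) b s2 =
    (N0 %/ NB)%N%:R * lingauss_MI St W b' s2.
  move=> W b b'; rewrite /lingauss_MI conv_quad // /gauss_entropy (det_bdiag _ _ _ _ Nf0).
  have dp : 0 < \det (W *m St *m W^T + s2%:M).
    by apply: det_psd_pos; [exact: s2p | exact: quad_psd].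
  move: (ln (2 * pi * expR 1)) => c.
  rewrite !det_scalar (lnXn _ dp) (lnXn (N0 %/ NB * Nf) s2p) (lnXn Nf s2p).
  move: (ln (\det (W *m St *m W^T + s2%:M))) (ln s2) => L m.
  rewrite natrM -[L *+ _]mulr_natr -[m *+ (_ * _)%N]mulr_natr -[m *+ Nf]mulr_natr natrM.
  by move: (N0 %/ NB)%:R Nf%:R => a f; ring.
have np : (0 < ((N0 %/ NB)%N%:R : R)) by rewrite ltr0n.
rewrite /MMI_conv /M_LFC -(ereal_sup_pZl _ np); congr ereal_sup.
apply/seteqP; split => v /=.
  move=> [W [b [hW ->]]].
  exists (lingauss_MI St W 0 s2)%:E; first by exists W, 0.
  by rewrite (key W b 0) EFinM.
move=> [x [W [b [hW ->]]] <-].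
exists W, 0; split => //.
by rewrite (key W 0 b) EFinM.
Qed.
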